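(* Consider the opinion--action model described in the context with $\phi\in(0,1)$ and arbitrary initial values $x_i(0),y_i(0)\in[0,1]$. Suppose there exists a finite time $T>0$ such that for all integers $t\ge T$ the digraph $\mathcal{G}(P(t))$ is strongly connected. Then for every $i\in\{1,\dots,2n\}$ the limit $z_i^\ast=\lim_{t\to\infty}z_i(t)$ exists, and $z_i^\ast=z_j^\ast$ for all $i,j\in\{1,\dots,2n\}$.
   Context: Fix an integer $n\ge 1$, agent set $\mathcal{V}=\{1,\dots,n\}$, a confidence threshold $\epsilon\in[0,1]$ and a decision weight $\phi\in[0,1]$. Each agent $i$ has opinion $x_i(t)\in[0,1]$ and action $y_i(t)\in[0,1]$. For $t\in\mathbb{Z}_{\ge0}$ the model evolves by: $\mathcal{N}_i(t)=\{j\in\mathcal{V}\mid j\neq i,\ |x_i(t)-y_j(t)|\le\epsilon\}$; $x_i(t+1)=\frac{x_i(t)+\sum_{j\in\mathcal{N}_i(t)}y_j(t)}{|\mathcal{N}_i(t)|+1}$; $y_i(t+1)=\phi\,x_i(t+1)+(1-\phi)\,y_{\mathrm{avg}}(t)$ with $y_{\mathrm{avg}}(t)=\frac1n\sum_{k=1}^n y_k(t)$. For $t\ge1$ the augmented state is $\mathbf{z}(t)\in\mathbb{R}^{2n}$ with $z_i(t)=x_i(t)$ and $z_{n+i}(t)=y_i(t-1)$; it satisfies $\mathbf{z}(t+1)=P(t)\mathbf{z}(t)$, where $P(t)=\begin{bmatrix}P_{11}(t)&P_{12}(t)\\ P_{21}&P_{22}\end{bmatrix}$ with $n\times n$ blocks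 $[P_{11}(t)]_{ij}=\frac{1}{|\mathcal{N}_i(t)|+1}$ if $j=i$, $\frac{\phi}{|\mathcal{N}_i(t)|+1}$ if $j\in\mathcal{N}_i(t)$, $0$ otherwise; $[P_{12}(t)]_{ij}=\frac{(1-\phi)|\mathcal{N}_i(t)|}{(|\mathcal{N}_i(t)|+1)n}$ for all $i,j$; $P_{21}=\phi I_n$; $P_{22}=\frac{1-\phi}{n}\mathbf{1}_n\mathbf{1}_n^\top$. For a nonnegative $A\in\mathbb{R}^{m\times m}$, $\mathcal{G}(A)$ is the digraph on $\{1,\dots,m\}$ with a directed edge from $j$ to $i$ iff $a_{ij}>0$. *)

(* Defs.v *)
From HB Require Import structures.
From mathcomp Require Import all_boot all_order all_algebra.
From mathcomp Require Import all_classical all_reals all_analysis.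
Set Implicit Arguments. Unset Strict Implicit. Unset Printing Implicit Defensive.
Import Order.TTheory GRing.Theory Num.Theory.
Local Open Scope ring_scope.

Section OpinionAction.
Variables (R : realType) (n : nat) (eps phi : R).

(* a state (x(t), y(t)) : opinions and actions of the n agents *)
Definition state := (('I_n -> R) * ('I_n -> R))%type.

Definition nbhd (s : state) (i : 'I_n) : {set 'I_n} :=
  [set j | (j != i) && (`|s.1 i - s.2 j| <= eps)].

Definition yavg (s : state) : R := (\sum_(k < n) s.2 k) / n%:R.

Definition step (s : state) : state :=
  let x' := fun i => (s.1 i + \sum_(j in nbhd s i) s.2 j) / (#|nbhd s i|%:R + 1) in
  (x', fun i => phi * x' i + (1 - phi) * yavg s).

Definition traj (x0 y0 : 'I_n -> R) (t : nat) : state := iter t step (x0, y0).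

(* augmented state z(t) in R^(2n): z_i(t) = x_i(t), z_(n+i)(t) = y_i(t-1)
   (only meaningful for t >= 1; at t = 0 it uses y(0) by truncated subtraction) *)
Definition zstate (x0 y0 : 'I_n -> R) (t : nat) (k : 'I_(n + n)) : R :=
  match fintype.split k with
  | inl i => (traj x0 y0 t).1 i
  | inr i => (traj x0 y0 t.-1).2 i
  end.

Definition P11 (s : state) : 'M[R]_n :=
  \matrix_(i, j) (if j == i then 1 / (#|nbhd s i|%:R + 1)
                  else if j \in nbhd s i then phi / (#|nbhd s i|%:R + 1) else 0).
Definition P12 (s : state) : 'M[R]_n :=
  \matrix_(i, j) ((1 - phi) * #|nbhd s i|%:R / ((#|nbhd s i|%:R + 1) * n%:R)).
Definition P21 : 'M[R]_n := phi%:M.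
Definition P22 : 'M[R]_n := const_mx ((1 - phi) / n%:R).

Definition Pmat (s : state) : 'M[R]_(n + n) := block_mx (P11 s) (P12 s) P21 P22.

Definition Pt (x0 y0 : 'I_n -> R) (t : nat) : 'M[R]_(n + n) := Pmat (traj x0 y0 t).

End OpinionAction.

Definition graph_edge (R : realType) (m : nat) (A : 'M[R]_m) : rel 'I_m :=
  fun j i => 0 < A i j.

Definition strongly_connected (R : realType) (m : nat) (A : 'M[R]_m) : Prop :=
  forall i j : 'I_m, connect (graph_edge A) i j.

(* Main.v *)
Require Import Defs.
From HB Require Import structures.
From mathcomp Require Import all_boot all_order all_algebra.
From mathcomp Require Import all_classical all_reals all_analysis.
From mathcomp Require Import ring lra zify.
Import Order.TTheory GRing.Theory Num.Theory.
Import numFieldTopology.Exports numFieldNormedType.Exports.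
Local Open Scope classical_set_scope.
Local Open Scope ring_scope.

Lemma connect_only_self (T : finType) (e : rel T) (b : T) :
  (forall a, e a b -> a = b) -> forall a, connect e a b -> a = b.
Proof.
move=> hb a /connectP [p]; elim: p a => [|c p IH] a /=; first by [].
move=> /andP [eac pc] hl; have cb := IH c pc hl; subst c; exact: hb.
Qed.

Lemma nbhd_nonempty (R : realType) (n : nat) (eps phi : R) (s : state R n) i :
  0 < phi < 1 -> strongly_connected (Pmat eps phi s) -> (0 < #|nbhd eps s i|)%N.
Proof.
move=> /andP [p0 p1] hsc; rewrite lt0n; apply/negP => /eqP /cards0_eq N0.
have hb : forall a, graph_edge (Pmat eps phi s) a (lshift n i) -> a = lshift n i.
  move=> a; rewrite /graph_edge /Pmat -(splitK a); case: (fintype.split a) => j /=.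
    rewrite block_mxEul /P11 mxE N0 inE; case: eqP => [-> //|_]; by rewrite ltxx.
  rewrite block_mxEur /P12 mxE N0 cards0 mulr0 mul0r; by rewrite ltxx.
have := @connect_only_self _ _ _ hb _ (hsc (rshift n i) (lshift n i)).
move/(congr1 (@nat_of_ord _)) => /=; have := ltn_ord i; lia.
Qed.
Lemma key_x (R : realType) (n : nat) (phi lo hi a : R) (x : 'I_n -> R)
  (N : {set 'I_n}) (i : 'I_n) :
  0 < phi < 1 -> (0 < #|N|)%N -> (forall j, lo <= x j <= hi) -> lo <= a <= hi ->
  ((1 - phi) / 2) * a + (1 - (1 - phi) / 2) * lo <=
    (x i + \sum_(j in N) (phi * x j + (1 - phi) * a)) / (#|N|%:R + 1) <=
  ((1 - phi) / 2) * a + (1 - (1 - phi) / 2) * hi.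
Proof.
move=> /andP [p0 p1] N0 hx /andP [la ah].
rewrite big_split /= -mulr_sumr sumr_const.
set c := #|N|%:R.
have c1 : 1 <= c by rewrite /c ler1n.
have [Sl Sh] : c * lo <= \sum_(j in N) x j /\ \sum_(j in N) x j <= c * hi.
  split.
    rewrite /c mulr_natl -sumr_const; apply: ler_sum => j _; by case/andP: (hx j).
  rewrite /c mulr_natl -sumr_const; apply: ler_sum => j _; by case/andP: (hx j).
set S := \sum_(j in N) x j in Sl Sh *.
have /andP [xl xh] := hx i.
have cp : 0 < c + 1 by lra.
rewrite ler_pdivlMr // ler_pdivrMr //.
rewrite -mulr_natr -/c.
have h1 : 0 <= (1 - phi) * (c - 1) * (a - lo) by rewrite !mulr_ge0 // ?subr_ge0 // ltW.
have h2 : 0 <= (1 - phi) * (c - 1) * (hi - a) by rewrite !mulr_ge0 // ?subr_ge0 // ltW.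
have h3 : phi * c * lo <= phi * S.
  by rewrite -mulrA ler_pM2l.
have h4 : phi * S <= phi * c * hi.
  by rewrite -mulrA ler_pM2l.
apply/andP; split; nra.
Qed.

Lemma key_y (R : realType) (phi lo hi a x : R) :
  0 < phi < 1 -> lo <= x <= hi -> lo <= a <= hi ->
  ((1 - phi) / 2) * a + (1 - (1 - phi) / 2) * lo <= phi * x + (1 - phi) * a <=
  ((1 - phi) / 2) * a + (1 - (1 - phi) / 2) * hi.
Proof. move=> /andP [p0 p1] /andP [? ?] /andP [? ?]; apply/andP; split; nra. Qed.

Lemma avg_bound (R : realType) (n : nat) (lo hi : R) (s : state R n) :
  (0 < n)%N -> (forall j, lo <= s.2 j <= hi) -> lo <= yavg s <= hi.
Proof.
move=> n0 hw; rewrite /yavg.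
have np : 0 < n%:R :> R by rewrite ltr0n.
rewrite ler_pdivlMr // ler_pdivrMr //; apply/andP; split.
  rewrite mulr_natr.
  rewrite -[X in _ *+ X]card_ord -sumr_const; apply: ler_sum => j _; by case/andP: (hw j).
rewrite mulr_natr.
rewrite -[X in _ *+ X]card_ord -sumr_const; apply: ler_sum => j _; by case/andP: (hw j).
Qed.

Fixpoint bseq (R : realType) (d b0 : R) (a : nat -> R) (k : nat) : R :=
  match k with 0%N => b0 | k'.+1 => d * a k' + (1 - d) * @bseq R d b0 a k' end.
Arguments bseq {R}.

Theorem proposition2 (R : realType) (n : nat) (eps phi : R) (x0 y0 : 'I_n -> R)
  (T : nat) :
  (1 <= n)%N ->
  0 <= eps <= 1 ->
  0 < phi < 1 ->
  (forall i, 0 <= x0 i <= 1) ->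
  (forall i, 0 <= y0 i <= 1) ->
  (0 < T)%N ->
  (forall t : nat, (T <= t)%N -> strongly_connected (Pt eps phi x0 y0 t)) ->
  (forall k : 'I_(n + n), cvgn (fun t => zstate eps phi x0 y0 t k)) /\
  (forall k l : 'I_(n + n),
     limn (fun t => zstate eps phi x0 y0 t k) = limn (fun t => zstate eps phi x0 y0 t l)).
Proof.
move=> n1 he hphi hx hy T0 hsc.
have /andP [p0 p1] := hphi.
set d := (1 - phi) / 2.
have d0 : 0 < d by rewrite /d; lra.
have d1 : d < 1 by rewrite /d; lra.
set U0 := T.-1.
have hT : T = U0.+1 by rewrite /U0 prednK.
pose a k := yavg (traj eps phi x0 y0 (U0 + k)).
pose B := \sum_kk `|zstate eps phi x0 y0 T kk|.
pose l := bseq d (- B) a.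
pose h := bseq d B a.
have hB : forall kk, - B <= zstate eps phi x0 y0 T kk <= B.
  move=> kk; rewrite -ler_norml /B (bigD1 kk) //= lerDl sumr_ge0 //.
have inv : forall k, (forall i, l k <= (traj eps phi x0 y0 (U0 + k).+1).1 i <= h k) /\
                     (forall i, l k <= (traj eps phi x0 y0 (U0 + k)).2 i <= h k).
  elim=> [|k [IHx IHw]].
    rewrite addn0; split => i.
      have := hB (lshift n i); by rewrite /zstate (unsplitK (inl i)) hT.
    have := hB (rshift n i); by rewrite /zstate (unsplitK (inr i)) hT.
  have ha : l k <= a k <= h k by apply: avg_bound.
  rewrite addnS; split => i.
    have nb : (0 < #|nbhd eps (traj eps phi x0 y0 (U0 + k).+1) i|)%N.
      apply: (@nbhd_nonempty R n eps phi) => //. exact: (hsc (U0 + k).+1 ltac:(rewrite hT; lia)).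
    have E : (traj eps phi x0 y0 (U0 + k).+2).1 i =
      ((traj eps phi x0 y0 (U0 + k).+1).1 i +
       \sum_(j in nbhd eps (traj eps phi x0 y0 (U0 + k).+1) i)
          (phi * (traj eps phi x0 y0 (U0 + k).+1).1 j + (1 - phi) * a k)) /
      (#|nbhd eps (traj eps phi x0 y0 (U0 + k).+1) i|%:R + 1) by [].
    rewrite E; exact: key_x.
  have E : (traj eps phi x0 y0 (U0 + k).+1).2 i =
      phi * (traj eps phi x0 y0 (U0 + k).+1).1 i + (1 - phi) * a k by [].
  rewrite E; exact: key_y.
have lS : forall k, l k.+1 = d * a k + (1 - d) * l k by [].
have hS : forall k, h k.+1 = d * a k + (1 - d) * h k by [].
have haa : forall k, l k <= a k <= h k.
  move=> k; apply: avg_bound => //; exact: (inv k).2.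
have lnd : nondecreasing_seq l.
  apply/nondecreasing_seqP => k; rewrite lS; have := haa k; nra.
have hni : forall k, h k.+1 <= h k by move=> k; rewrite hS; have := haa k; nra.
have hle0 : forall k, h k <= h 0%N.
  elim=> // k IH; exact: le_trans (hni k) IH.
have lh : forall k, l k <= h k.
  move=> k; have := haa k; move=> /andP[]; exact: le_trans.
have diff : forall k, h k = l k + (1 - d) ^+ k * (B + B).
  elim=> [|k IH]; first by rewrite /h /l /= expr0 mul1r; lra.
  rewrite hS lS exprS IH; ring.
have lcv : l @ \oo --> sup (range l).
  apply: nondecreasing_cvgn => //; exists (h 0%N) => _ [k _ <-].
  exact: le_trans (lh k) (hle0 k).
set L := sup (range l) in lcv.
have hcv : h @ \oo --> L.
  have -> : h = (fun k => l k + (1 - d) ^+ k * (B + B)).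
    by apply/funext => k; rewrite diff.
  rewrite -[L]addr0; apply: cvgD => //.
  rewrite -(mul0r (B + B)); apply: cvgMr_tmp; apply: cvg_expr.
  rewrite ger0_norm; lra.
have hz : forall kk, (fun t => zstate eps phi x0 y0 t kk) @ \oo --> L.
  move=> kk; rewrite -(cvg_shiftn T).
  apply: (squeeze_cvgr _ lcv hcv).
  near=> k => /=.
  rewrite /zstate; case: (fintype.split kk) => i.
    rewrite addnC hT addSn; exact: (inv k).1.
  rewrite addnC hT addSn /=; exact: (inv k).2.
split.
  move=> kk; exact: cvgP (hz kk).
by move=> kk ll; rewrite (cvg_lim _ (hz kk)) ?(cvg_lim _ (hz ll)).
Unshelve. all: end_near.
Qed.
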